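(* Let $W$ be the Witt algebra with basis $\{x_n\mid n\in\mathbb{Z}\}$ and bracket $[x_m,x_n]=(n-m)x_{m+n}$. For $\beta\in\mathbb{C}$ and $k\in\mathbb{Z}$ with $\beta-k\neq0$, the product $$x_mx_n=(n+k)x_{m+n}\ \text{ if } m+n+k\neq0,\qquad x_{-n-k}x_n=\frac{(n+k)(\beta-n-k)}{\beta-k}x_{-k},$$ defines a left-symmetric algebra $V^{\beta,k}$ on the underlying space of $W$ whose commutator $x_mx_n-x_nx_m$ is the bracket of $W$.
   Context: A left-symmetric algebra is a vector space with bilinear product satisfying $(xy)z-x(yz)=(yx)z-y(xz)$ for all $x,y,z$. *)

(* Defs.v *)
From HB Require Import structures.
From mathcomp Require Import all_boot all_order all_algebra.
Set Implicit Arguments. Unset Strict Implicit. Unset Printing Implicit Defensive.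
Import Order.TTheory GRing.Theory Num.Theory.
Local Open Scope ring_scope.

Definition spans (C : fieldType) (V : lmodType C) (e : int -> V) : Prop :=
  forall v : V, exists (s : seq int) (a : int -> C),
    v = \sum_(i <- s) a i *: e i.

Definition lin_indep (C : fieldType) (V : lmodType C) (e : int -> V) : Prop :=
  forall (s : seq int) (a : int -> C), uniq s ->
    \sum_(i <- s) a i *: e i = 0 -> forall i, i \in s -> a i = 0.

Definition is_basis (C : fieldType) (V : lmodType C) (e : int -> V) : Prop :=
  spans e /\ lin_indep e.

Definition bilinear_op (C : fieldType) (V : lmodType C) (p : V -> V -> V) : Prop :=
  (forall (a : C) (x y z : V), p (a *: x + y) z = a *: p x z + p y z) /\
  (forall (a : C) (x y z : V), p z (a *: x + y) = a *: p z x + p z y).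

Definition left_symmetric (C : fieldType) (V : lmodType C) (p : V -> V -> V) : Prop :=
  forall x y z : V, p (p x y) z - p x (p y z) = p (p y x) z - p y (p x z).

Definition witt_bracket_on (C : fieldType) (V : lmodType C) (e : int -> V)
    (br : V -> V -> V) : Prop :=
  forall m n : int, br (e m) (e n) = (n - m)%:~R *: e (m + n).

Definition lsa_coef (C : fieldType) (beta : C) (k m n : int) : C :=
  if m + n + k != 0 then (n + k)%:~R
  else ((n + k)%:~R * (beta - (n + k)%:~R)) / (beta - k%:~R).

Definition lsa_product_on (C : fieldType) (V : lmodType C) (e : int -> V)
    (beta : C) (k : int) (p : V -> V -> V) : Prop :=
  forall m n : int, p (e m) (e n) = lsa_coef beta k m n *: e (m + n).

(* Main.v *)
Require Import Defs.
From HB Require Import structures.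
From mathcomp Require Import all_boot all_order all_algebra zify ring.
From Stdlib Require Import ClassicalEpsilon.
Import Order.TTheory GRing.Theory Num.Theory.
Local Open Scope ring_scope.
Set Implicit Arguments. Unset Strict Implicit.
Ltac elim1 m n l k :=
  first [ (have E : m = - n - k by lia); subst m
        | (have E : m = - n - l - k by lia); subst m
        | (have E : m = - l - k by lia); subst m
        | (have E : m = 0 by lia); subst m
        | (have E : m = - k by lia); subst m
        | (have E : m = l by lia); subst m
        | (have E : m = n by lia); subst m
        | (have E : n = - l - k by lia); subst n
        | (have E : n = 0 by lia); subst n
        | (have E : n = - k by lia); subst n
        | (have E : n = l by lia); subst n
        | (have E : l = 0 by lia); subst l
        | (have E : l = - k by lia); subst l
        | (have E : k = - (2 * l) by lia); subst k
        | (have E : k = - (2 * n) by lia); subst k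
        | (have E : k = - (2 * m) by lia); subst k
        | (have E : k = 0 by lia); subst k ].

Lemma scal (C : fieldType) (beta : C) (k m n l : int) :
  beta - k%:~R != 0 ->
  lsa_coef beta k m n * lsa_coef beta k (m + n) l
  - lsa_coef beta k n l * lsa_coef beta k m (n + l)
  = lsa_coef beta k n m * lsa_coef beta k (n + m) l
  - lsa_coef beta k m l * lsa_coef beta k n (m + l).
Proof.
move=> hb; rewrite /lsa_coef.
repeat (case: ifP => [/eqP ?|/negbFE/eqP ?]); try (exfalso; lia).
all: repeat elim1 m n l k.
all: field; move: hb; rewrite ?intrD ?intrN ?intrM ?mulr0z ?subr0 //.
Qed.


Lemma comm_scal (C : fieldType) (beta : C) (k m n : int) :
  beta - k%:~R != 0 ->
  lsa_coef beta k m n - lsa_coef beta k n m = (n - m)%:~R.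
Proof.
move=> hb; rewrite /lsa_coef.
repeat (case: ifP => [/eqP ?|/negbFE/eqP ?]); try (exfalso; lia).
all: repeat elim1 m n n k.
all: field; move: hb; rewrite ?intrD ?intrN ?intrM ?mulr0z ?subr0 //.
Qed.

Lemma regroup (C : fieldType) (W : lmodType C) (r : seq (int * C)) (g : int -> W) :
  \sum_(x <- r) x.2 *: g x.1 =
  \sum_(i <- undup (map fst r)) (\sum_(x <- r | x.1 == i) x.2) *: g i.
Proof.
transitivity (\sum_(x <- r) \sum_(i <- undup (map fst r))
                  (if i == x.1 then x.2 *: g x.1 else 0)).
  apply: eq_big_seq => x xr.
  rewrite (bigD1_seq x.1) ?eqxx /= ?undup_uniq ?mem_undup ?map_f //.
  by rewrite big1 ?addr0 // => i /negPf ->.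
transitivity (\sum_(i <- undup (map fst r)) \sum_(x <- r)
                  (if i == x.1 then x.2 *: g x.1 else 0)).
  exact: exchange_big.
apply: eq_bigr => i _.
rewrite scaler_suml [RHS]big_mkcond; apply: eq_bigr => x _.
by rewrite eq_sym; case: eqP => // ->.
Qed.

Lemma key (C : fieldType) (V : lmodType C) (e : int -> V) (W : lmodType C)
  (f : int -> W) (r : seq (int * C)) :
  lin_indep e -> \sum_(x <- r) x.2 *: e x.1 = 0 -> \sum_(x <- r) x.2 *: f x.1 = 0.
Proof.
move=> li; rewrite !regroup => H.
apply: big1_seq => i /andP[_ iin].
by rewrite (li _ (fun i => \sum_(x <- r | x.1 == i) x.2) (undup_uniq _) H i iin) scale0r.
Qed.

Lemma rep_ex (C : fieldType) (V : lmodType C) (e : int -> V) (hs : spans e) (v : V) :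
  {r : seq (int * C) | v = \sum_(x <- r) x.2 *: e x.1}.
Proof.
apply: constructive_indefinite_description.
case: (hs v) => s [a ->]; exists [seq (i, a i) | i <- s].
by rewrite big_map.
Defined.

Definition ext (C : fieldType) (V : lmodType C) (e : int -> V) (hs : spans e)
  (W : lmodType C) (f : int -> W) (v : V) : W :=
  \sum_(x <- sval (rep_ex hs v)) x.2 *: f x.1.

Lemma sumNs (C : fieldType) (W : lmodType C) (g : int -> W) (r : seq (int * C)) :
  \sum_(j <- r) - j.2 *: g j.1 = - \sum_(j <- r) j.2 *: g j.1.
Proof. by rewrite -sumrN; apply: eq_bigr => j _; rewrite scaleNr. Qed.

Lemma ext_rep (C : fieldType) (V : lmodType C) (e : int -> V) (hs : spans e)
  (W : lmodType C) (f : int -> W) (v : V) (r : seq (int * C)) :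
  lin_indep e -> v = \sum_(x <- r) x.2 *: e x.1 ->
  ext hs f v = \sum_(x <- r) x.2 *: f x.1.
Proof.
move=> li hv; rewrite /ext; case: (rep_ex hs v) => r0 /= h0.
apply/eqP; rewrite -subr_eq0; apply/eqP.
have := key f (r := r0 ++ [seq (x.1, - x.2) | x <- r]) li.
rewrite !big_cat !big_map /= !sumNs; apply; by rewrite -h0 -hv subrr.
Qed.

Lemma ext_lin (C : fieldType) (V : lmodType C) (e : int -> V) (hs : spans e)
  (W : lmodType C) (f : int -> W) (a : C) (u w : V) :
  lin_indep e -> ext hs f (a *: u + w) = a *: ext hs f u + ext hs f w.
Proof.
move=> li.
rewrite (ext_rep hs f (r := [seq (x.1, a * x.2) | x <- sval (rep_ex hs u)]
                          ++ sval (rep_ex hs w)) li).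
  rewrite big_cat big_map /= /ext scaler_sumr; congr (_ + _).
  by apply: eq_bigr => x _; rewrite scalerA.
rewrite big_cat big_map /= -(svalP (rep_ex hs w)); congr (_ + _).
rewrite {1}(svalP (rep_ex hs u)) scaler_sumr.
by apply: eq_bigr => x _; rewrite scalerA.
Qed.

Lemma ext_e (C : fieldType) (V : lmodType C) (e : int -> V) (hs : spans e)
  (W : lmodType C) (f : int -> W) (i : int) :
  lin_indep e -> ext hs f (e i) = f i.
Proof.
move=> li; rewrite (ext_rep hs f (r := [:: (i, 1)]) li) ?big_seq1 /= ?scale1r //.
Qed.

Lemma ext_fun (C : fieldType) (V : lmodType C) (e : int -> V) (hs : spans e)
  (W : lmodType C) (F G : int -> W) (a : C) (v : V) :
  ext hs (fun i => a *: F i + G i) v = a *: ext hs F v + ext hs G v.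
Proof.
rewrite /ext scaler_sumr -big_split /=; apply: eq_bigr => x _.
by rewrite scalerDr !scalerA mulrC.
Qed.

Definition lin (C : fieldType) (V W : lmodType C) (G : V -> W) :=
  forall a u w, G (a *: u + w) = a *: G u + G w.

Lemma lin0 (C : fieldType) (V W : lmodType C) (G : V -> W) : lin G -> G 0 = 0.
Proof.
move=> hG; have := hG 1 0 0; rewrite !scale1r addr0 => h.
by apply: (addrI (G 0)); rewrite addr0 -h.
Qed.

Lemma lin_zero (C : fieldType) (V W : lmodType C) (e : int -> V) (G : V -> W) :
  spans e -> lin G -> (forall i, G (e i) = 0) -> forall v, G v = 0.
Proof.
move=> hs hG he v; case: (hs v) => s [a ->].
elim: s => [|i s IH]; first by rewrite big_nil lin0.
by rewrite big_cons hG he scaler0 add0r.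
Qed.

Lemma lin_l (C : fieldType) (V : lmodType C) (p : V -> V -> V) z :
  bilinear_op p -> lin (fun x => p x z).
Proof. by move=> [h1 h2] a u w; rewrite h1. Qed.

Lemma lin_r (C : fieldType) (V : lmodType C) (p : V -> V -> V) z :
  bilinear_op p -> lin (fun x => p z x).
Proof. by move=> [h1 h2] a u w; rewrite h2. Qed.

Lemma lin_comp (C : fieldType) (V : lmodType C) (G H : V -> V) :
  lin G -> lin H -> lin (fun x => G (H x)).
Proof. by move=> hG hH a u w; rewrite hH hG. Qed.

Lemma lin_sub (C : fieldType) (V : lmodType C) (G H : V -> V) :
  lin G -> lin H -> lin (fun x => G x - H x).
Proof. by move=> hG hH a u w; rewrite hG hH scalerBr opprD addrACA. Qed.

Lemma pZl (C : fieldType) (V : lmodType C) (p : V -> V -> V) a x z :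
  bilinear_op p -> p (a *: x) z = a *: p x z.
Proof.
move=> hp; have := lin_l z hp a x 0; rewrite addr0 => ->.
by rewrite (lin0 (lin_l z hp)) addr0.
Qed.

Lemma pZr (C : fieldType) (V : lmodType C) (p : V -> V -> V) a x z :
  bilinear_op p -> p z (a *: x) = a *: p z x.
Proof.
move=> hp; have := lin_r z hp a x 0; rewrite addr0 => ->.
by rewrite (lin0 (lin_r z hp)) addr0.
Qed.

Lemma ext_eq (C : fieldType) (V : lmodType C) (e : int -> V) (hs : spans e)
  (W : lmodType C) (F G : int -> W) (v : V) :
  (forall i, F i = G i) -> ext hs F v = ext hs G v.
Proof. by move=> h; rewrite /ext; apply: eq_bigr => x _; rewrite h. Qed.

Unset Implicit Arguments.

Theorem theorem3p8 (C : numClosedFieldType) (V : lmodType C) (e : int -> V)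
    (br : V -> V -> V) (beta : C) (k : int) :
  is_basis e -> bilinear_op br -> witt_bracket_on e br ->
  beta - k%:~R != 0 ->
  (exists p : V -> V -> V, bilinear_op p /\ lsa_product_on e beta k p) /\
  (forall p : V -> V -> V, bilinear_op p -> lsa_product_on e beta k p ->
     left_symmetric p /\ (forall x y : V, p x y - p y x = br x y)).
Proof.
move=> [hs li] hbr hw hb; split.
  pose p x y := ext hs (fun i => ext hs (fun j => lsa_coef beta k i j *: e (i + j)) y) x.
  exists p; split; last first.
    by move=> m n; rewrite /p ext_e // ext_e.
  split=> a x y z; rewrite /p.
    exact: ext_lin.
  by rewrite -ext_fun; apply: ext_eq => i; rewrite ext_lin.
move=> p hp hprod; split.
  move=> x y z; apply/eqP; rewrite -subr_eq0; apply/eqP.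
  move: x; apply: (lin_zero hs) => [|i].
    apply: lin_sub; apply: lin_sub.
    - exact: (lin_comp (lin_l z hp) (lin_l y hp)).
    - exact: (lin_l (p y z) hp).
    - exact: (lin_comp (lin_l z hp) (lin_r y hp)).
    - exact: (lin_comp (lin_r y hp) (lin_l z hp)).
  move: y; apply: (lin_zero hs) => [|j].
    apply: lin_sub; apply: lin_sub.
    - exact: (lin_comp (lin_l z hp) (lin_r (e i) hp)).
    - exact: (lin_comp (lin_r (e i) hp) (lin_l z hp)).
    - exact: (lin_comp (lin_l z hp) (lin_l (e i) hp)).
    - exact: (lin_l (p (e i) z) hp).
  move: z; apply: (lin_zero hs) => [|l].
    apply: lin_sub; apply: lin_sub.
    - exact: (lin_r _ hp).
    - exact: (lin_comp (lin_r (e i) hp) (lin_r (e j) hp)).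
    - exact: (lin_r _ hp).
    - exact: (lin_comp (lin_r (e j) hp) (lin_r (e i) hp)).
  rewrite /= !hprod !(pZl (p:=p)) // !(pZr (p:=p)) // !hprod !scalerA.
  rewrite (addrA i j l) (addrA j i l) (addrC j i) -!scalerBl.
  by rewrite (scal _ _ _ hb) (addrC j i) subrr scale0r.
move=> x y; apply/eqP; rewrite -subr_eq0; apply/eqP.
move: x; apply: (lin_zero hs) => [|i].
  apply: lin_sub; [apply: lin_sub|].
  - exact: (lin_l y hp).
  - exact: (lin_r y hp).
  - exact: (lin_l y hbr).
move: y; apply: (lin_zero hs) => [|j].
  apply: lin_sub; [apply: lin_sub|].
  - exact: (lin_r _ hp).
  - exact: (lin_l _ hp).
  - exact: (lin_r _ hbr).
rewrite /= !hprod hw (addrC j i) -scalerBl (comm_scal _ _ hb).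
by rewrite subrr.
Qed.
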